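(* Let $\mathcal{F}=(A,R)$ and $\mathcal{G}=(A,R')$ be argumentation frameworks with $R\subseteq R'$ and $\mathrm{conf}(\mathcal{F})=\mathrm{conf}(\mathcal{G})$, and let $S\in\mathit{tfcf2}(\mathcal{F})$. Then $S\in\mathit{tfcf2}(\mathcal{G})$. In particular, $\mathit{tfcf2}$ is both $\preceq^E_\cap$-skepticism adequate and $\preceq^E_W$-skepticism adequate.
   Context: An argumentation framework (AF) is $\mathcal{F}=(A_{\mathcal{F}},R_{\mathcal{F}})$ with $R_{\mathcal{F}}\subseteq A_{\mathcal{F}}\times A_{\mathcal{F}}$ (possibly infinite); $a\rightarrow b$ means $(a,b)\in R_{\mathcal{F}}$. $\mathrm{conf}(\mathcal{F})=\{(x,y):(x,y)\in R_{\mathcal{F}}\text{ or }(y,x)\in R_{\mathcal{F}}\}$. $\tau_1\preceq^E_\cap\tau_2$ iff $\bigcap_{S_1\in\tau_1}S_1\subseteq\bigcap_{S_2\in\tau_2}S_2$; $\tau_1\preceq^E_W\tau_2$ iff for every $S_2\in\tau_2$ there is $S_1\in\tau_1$ with $S_1\subseteq S_2$. A semantics $\sigma$ is $\preceq$-skepticism adequate if for any AFs $\mathcal{F},\mathcal{G}$ on the same argument set with $R_{\mathcal{F}}\supseteq R_{\mathcal{G}}$ and $\mathrm{conf}(\mathcal{F})=\mathrm{conf}(\mathcal{G})$, $\sigma(\mathcal{F})\preceq\sigma(\mathcal{G})$. $\mathcal{F}|_B=(A_{\mathcal{F}}\cap B,R_{\mathcal{F}}\cap(B\times B))$. Conflict-free: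 no $a,b\in S$ with $a\rightarrow b$; naive: $\subseteq$-maximal conflict-free. $\mathrm{SCC}(a)$: set of $b$ with directed attack paths (possibly of length 0) from $a$ to $b$ and back. $D_S(X)=\{b\in X:\exists a\in S\setminus X,\ a\rightarrow b\}$. $C^0_S(a)=\mathrm{SCC}(a)$; $C^{\alpha+1}_S(a)$ = component of $a$ in $\mathcal{F}|_{C^\alpha_S(a)\setminus D_S(C^\alpha_S(a))}$ (empty if $a$ not there); for limit $\lambda$, component of $a$ in $\mathcal{F}|_{\bigcap_{\alpha<\lambda}C^\alpha_S(a)}$; $\alpha_S(a)$ = least $\alpha$ with $a\notin C^\alpha_S(a)$ or $C^{\alpha+1}_S(a)=C^\alpha_S(a)$. $S\in\mathit{tfcf2}(\mathcal{F})$ iff $S$ is conflict-free and for each $a\in A_{\mathcal{F}}$, $a\notin C^{\alpha_S(a)}_S(a)$ or $S\cap C^{\alpha_S(a)}_S(a)$ is a naive extension of $\mathcal{F}|_{C^{\alpha_S(a)}_S(a)}$. *)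

(* Defs.v *)
(* An argumentation framework over a type A of arguments is
   given by its attack relation R : A -> A -> Prop (the argument set is the
   whole type A, possibly infinite). *)
From Stdlib Require Import Relations.

Set Implicit Arguments.

Section AF.
Variable A : Type.

Definition aset := A -> Prop.
Definition att := A -> A -> Prop.

Definition subset (X Y : aset) : Prop := forall x, X x -> Y x.
Definition same (X Y : aset) : Prop := forall x, X x <-> Y x.
Definition fullset : aset := fun _ => True.

Definition conf (R : att) : att := fun x y => R x y \/ R y x.

Definition restr (R : att) (B : aset) : att := fun x y => B x /\ B y /\ R x y.

Definition conflict_free (R : att) (S : aset) : Prop :=
  forall a b, S a -> S b -> ~ R a b.

Definition naive_in (R : att) (B : aset) (T : aset) : Prop :=
  subset T B /\ conflict_free (restr R B) T /\
  forall U, subset U B -> conflict_free (restr R B) U -> subset T U -> subset U T.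

Definition reach (R : att) (B : aset) : att := clos_refl_trans A (restr R B).

Definition comp (R : att) (B : aset) (a : A) : aset :=
  fun b => B a /\ reach R B a b /\ reach R B b a.

Definition SCC (R : att) (a : A) : aset := comp R fullset a.

Definition Dset (R : att) (S X : aset) : aset :=
  fun b => X b /\ exists c, S c /\ ~ X c /\ R c b.

Definition stepC (R : att) (S : aset) (a : A) (X : aset) : aset :=
  comp R (fun x => X x /\ ~ Dset R S X x) a.

Definition inter (P : aset -> Prop) : aset := fun x => forall Y, P Y -> Y x.

(* Since ordinals are
   not available, the transfinite sequence is generated inductively: initial
   stage SCC(a), successor stages, and "limit" stages = component of a in the
   restriction to the intersection of a family of earlier stages. *)
Inductive stage (R : att) (S : aset) (a : A) : aset -> Prop :=
| stage0 : stage R S a (SCC R a)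
| stageS : forall X, stage R S a X -> stage R S a (stepC R S a X)
| stageL : forall P : aset -> Prop, (forall Y, P Y -> stage R S a Y) ->
    stage R S a (comp R (inter P) a).

Definition terminal (R : att) (S : aset) (a : A) (X : aset) : Prop :=
  ~ X a \/ same (stepC R S a X) X.

(* X = C^{alpha_S(a)}_S(a): the terminal stage reached first (the stages
   decrease, so the first one is the largest one). *)
Definition alpha_stage (R : att) (S : aset) (a : A) (X : aset) : Prop :=
  stage R S a X /\ terminal R S a X /\
  forall Y, stage R S a Y -> terminal R S a Y -> subset Y X.

Definition tfcf2 (R : att) (S : aset) : Prop :=
  conflict_free R S /\
  forall a X, alpha_stage R S a X ->
    ~ X a \/ naive_in R X (fun x => S x /\ X x).

Definition le_cap (t1 t2 : aset -> Prop) : Prop :=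
  subset (inter t1) (inter t2).
Definition le_W (t1 t2 : aset -> Prop) : Prop :=
  forall S2, t2 S2 -> exists S1, t1 S1 /\ subset S1 S2.

Definition skept_adequate (sigma : att -> aset -> Prop)
  (le : (aset -> Prop) -> (aset -> Prop) -> Prop) : Prop :=
  forall RF RG : att, (forall x y, RG x y -> RF x y) ->
    (forall x y, conf RF x y <-> conf RG x y) -> le (sigma RF) (sigma RG).

End AF.

(* Main.v *)
Require Import Defs.
From Stdlib Require Import Relations Classical.

Section Aux.
Variable A : Type.
Implicit Types (R : att A) (S B G X Y : aset A).

Lemma reach_mono R R' B B' x y :
  (forall u v, R u v -> R' u v) -> (forall u, B u -> B' u) ->
  reach R B x y -> reach R' B' x y.
Proof.
  intros HR HB H. unfold reach in *. induction H.
  - apply rt_step. destruct H as [h1 [h2 h3]]. repeat split; auto.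
  - apply rt_refl.
  - eapply rt_trans; eauto.
Qed.

Definition good R S a G :=
  G a /\ (forall x, G x -> reach R G a x /\ reach R G x a) /\
  (forall d w, S d -> ~ G d -> G w -> ~ R d w).

Lemma good_comp R S a G B : good R S a G ->
  (forall u, G u -> B u) -> forall x, G x -> comp R B a x.
Proof.
  intros [Ga [Hr _]] HGB x Gx. destruct (Hr x Gx) as [h1 h2].
  split; [auto|split]; eapply reach_mono; eauto.
Qed.

Lemma comp_sub R B a x : comp R B a x -> B x.
Proof.
  intros [Ba [h1 h2]]. unfold reach in h1. clear h2.
  induction h1; auto. destruct H as [_ [h _]]; auto.
Qed.

Lemma stage_good R S a G : good R S a G ->
  forall Y, stage R S a Y -> forall x, G x -> Y x.
Proof.
  intros Hg Y HY. induction HY; intros x Gx.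
  - eapply good_comp; eauto. intros; exact I.
  - eapply good_comp; eauto.
    intros u Gu. split; auto. intros [_ [c [Sc [nXc Rcu]]]].
    destruct Hg as [_ [_ Hn]]. apply (Hn c u); auto.
  - eapply good_comp; eauto.
    intros u Gu Y PY. apply H0; auto.
Qed.

Lemma terminal_good R S a X : terminal R S a X -> X a -> good R S a X.
Proof.
  intros [H|H] Xa; [contradiction|].
  split; [auto|split].
  - intros x Xx. apply H in Xx. destruct Xx as [_ [h1 h2]].
    split; eapply reach_mono; try eassumption; auto; intros u [? ?]; auto.
  - intros d w Sd nXd Xw Rdw. apply H in Xw.
    apply comp_sub in Xw. destruct Xw as [Xw Hd]. apply Hd.
    split; auto. exists d; auto.
Qed.

Lemma stage_a R S a Y x : stage R S a Y -> Y x -> Y a.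
Proof.
  intros HY Yx. destruct HY; destruct Yx as [Ba _];
    (split; [exact Ba|split; apply rt_refl]).
Qed.

Definition least R S a := comp R (inter (stage R S a)) a.

Lemma least_alpha R S a : alpha_stage R S a (least R S a).
Proof.
  assert (Hs : stage R S a (least R S a)) by (apply stageL; auto).
  assert (Hsub : forall Y, stage R S a Y -> forall x, least R S a x -> Y x).
  { intros Y HY x Hx. apply comp_sub in Hx. apply Hx; auto. }
  split; [auto|split].
  - right. intros x; split; intro Hx.
    + apply comp_sub in Hx. destruct Hx as [Hx _]. exact Hx.
    + apply (Hsub _ (stageS Hs)); auto.
  - intros Y HY HT x Yx.
    assert (Ya : Y a) by (eapply stage_a; eauto).
    eapply stage_good; [apply (terminal_good _ _ _ _ HT Ya)|exact Hs|exact Yx].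
Qed.

Lemma death R S b Y : stage R S b Y -> Y b \/ exists c, S c /\ R c b.
Proof.
  intros HY. induction HY.
  - left. split; [exact I|split; apply rt_refl].
  - destruct IHHY as [Xb|E]; [|right; auto].
    destruct (classic (Dset R S X b)) as [[_ [c [Sc [_ Rcb]]]]|nD].
    + right; eauto.
    + left. split; [split; auto|split; apply rt_refl].
  - destruct (classic (exists c, S c /\ R c b)) as [E|nE]; [right; auto|].
    left. split; [|split; apply rt_refl].
    intros Y PY. destruct (H0 Y PY) as [h|h]; [exact h|contradiction].
Qed.

End Aux.

Lemma part1 (A : Type) (R R' : att A) (S : aset A) :
  (forall x y, R x y -> R' x y) ->
  (forall x y, conf R x y <-> conf R' x y) ->
  tfcf2 R S -> tfcf2 R' S.
Proof.
  intros HRR Hconf [cfS HS].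
  assert (cfS' : conflict_free R' S).
  { intros x y Sx Sy H'. assert (c : conf R' x y) by (left; auto).
    apply Hconf in c. destruct c as [c|c]; [exact (cfS x y Sx Sy c)|exact (cfS y x Sy Sx c)]. }
  split; [exact cfS'|].
  intros a X' [HX'st [HX'term HX'max]].
  destruct (classic (X' a)) as [Xa|nXa]; [right|left; auto].
  pose proof (terminal_good _ _ _ _ _ HX'term Xa) as Hg.
  split; [intros x [_ h]; exact h|split].
  - intros x y [Sx Xx] [Sy Xy] [_ [_ H]]. exact (cfS' x y Sx Sy H).
  - intros U HUX cfU HSU x Ux.
    split; [|apply HUX; auto].
    apply NNPP; intro nSx.
    assert (Xx : X' x) by (apply HUX; auto).
    assert (noatt : forall c, S c -> X' c -> ~ conf R' c x).
    { intros c Sc Xc [h|h].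
      - apply (cfU c x); [apply HSU; split; auto|auto|split;[auto|split;auto]].
      - apply (cfU x c); [auto|apply HSU; split; auto|split;[auto|split;auto]]. }
    assert (inX : forall c, S c -> R' c x -> X' c).
    { intros c Sc Rc. apply NNPP; intro nXc.
      destruct Hg as [_ [_ Hn]]. eapply Hn; eauto. }
    pose proof (least_alpha A R S x) as HZ.
    set (Z := least A R S x) in *.
    destruct (HS x Z HZ) as [nZx|Hnaive].
    + destruct HZ as [HZs _].
      destruct (death _ _ _ _ _ HZs) as [Zx|[c [Sc Rcx]]]; [contradiction|].
      apply (noatt c Sc); [apply inX; auto|left; auto].
    + assert (Zx : Z x).
      { apply NNPP; intro nZx. destruct HZ as [HZs _].
        destruct (death _ _ _ _ _ HZs) as [Zx|[c [Sc Rcx]]]; [contradiction|].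
        apply (noatt c Sc); [apply inX; auto|left; auto]. }
      destruct HZ as [HZs [HZt _]].
      pose proof (terminal_good _ _ _ _ _ HZt Zx) as HgZ.
      set (N := fun w => X' w \/ Z w \/ (S w /\ exists y, Z y /\ R' w y)).
      assert (HgN : good A R' S a N).
      { destruct Hg as [_ [HrX HnX]]. destruct HgZ as [_ [HrZ HnZ]].
        assert (Nx : forall w, X' w -> N w) by (intros; left; auto).
        assert (Nz : forall w, Z w -> N w) by (intros; right; left; auto).
        assert (rz : forall w, Z w -> reach R' N a w /\ reach R' N w a).
        { intros w Zw. destruct (HrX x Xx) as [r1 r2]. destruct (HrZ w Zw) as [r3 r4].
          split; eapply rt_trans.
          - eapply reach_mono; [| |exact r1]; auto.
          - eapply reach_mono; [| |exact r3]; auto.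
          - eapply reach_mono; [| |exact r4]; auto.
          - eapply reach_mono; [| |exact r2]; auto. }
        split; [left; auto|split].
        - intros w [Xw|[Zw|[Sw [y [Zy Rwy]]]]].
          + destruct (HrX w Xw) as [r1 r2]. split; [eapply reach_mono; [| |exact r1]|eapply reach_mono; [| |exact r2]]; auto.
          + auto.
          + assert (c : conf R' w y) by (left; auto). apply Hconf in c.
            destruct c as [c|c].
            * destruct (classic (Z w)) as [Zw|nZw]; [auto|].
              exfalso. eapply HnZ; eauto.
            * assert (Nw : N w) by (right; right; split; eauto).
              destruct (rz y Zy) as [r1 r2]. split.
              -- apply rt_trans with y; [exact r1|].
                 apply rt_step. split; [apply Nz; auto|split; [exact Nw|apply HRR; exact c]].
              -- apply rt_trans with y; [|exact r2].
                 apply rt_step. split; [exact Nw|split; [apply Nz; auto|exact Rwy]].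
        - intros d w Sd nNd [Xw|[Zw|[Sw _]]] Rdw.
          + apply (HnX d w Sd); auto.
          + apply nNd. right; right. split; eauto.
          + exact (cfS' d w Sd Sw Rdw). }
      assert (ZX : forall w, Z w -> X' w).
      { intros w Zw. eapply stage_good; [exact HgN|exact HX'st|right; left; auto]. }
      destruct Hnaive as [_ [_ Hmax]].
      assert (HU' : subset (fun w => (S w /\ Z w) \/ w = x) (fun w => S w /\ Z w)).
      { apply Hmax.
        - intros w [[_ h]| ->]; auto.
        - intros u v Hu Hv [_ [_ Ruv]].
          destruct Hu as [[Su Zu]| ->]; destruct Hv as [[Sv Zv]| ->].
          + exact (cfS u v Su Sv Ruv).
          + apply (noatt u Su (ZX u Zu)). left; auto.
          + apply (noatt v Sv (ZX v Zv)). right; auto.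
          + apply (cfU x x Ux Ux). split; [auto|split; auto].
        - intros w h; left; auto. }
      destruct (HU' x (or_intror eq_refl)) as [Sx _]. contradiction.
Qed.

Theorem theorem15 (A : Type) :
  (forall (R R' : att A) (S : aset A),
     (forall x y, R x y -> R' x y) ->
     (forall x y, conf R x y <-> conf R' x y) ->
     tfcf2 R S -> tfcf2 R' S)
  /\ skept_adequate (@tfcf2 A) (@le_cap A)
  /\ skept_adequate (@tfcf2 A) (@le_W A).
Proof.
  split; [exact (@part1 A)|split].
  - intros RF RG HGF Hc x Hx S2 HS2. apply Hx.
    apply (part1 A RG RF); auto. intros u v; symmetry; auto.
  - intros RF RG HGF Hc S2 HS2. exists S2. split; [|intros u h; exact h].
    apply (part1 A RG RF); auto. intros u v; symmetry; auto.
Qed.
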